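(* For every field $K$, the set $\widetilde{K}$ is a subfield of $K$.
   Context: Let $K$ be a field. For $r\in K$, a finite set $A(r)$ with $\{r\}\subseteq A(r)\subseteq K$ is called adequate for $r$ if every mapping $f:A(r)\to K$ satisfying (1) if $1\in A(r)$ then $f(1)=1$; (2) if $a,b\in A(r)$ and $a+b\in A(r)$ then $f(a+b)=f(a)+f(b)$; (3) if $a,b\in A(r)$ and $a\cdot b\in A(r)$ then $f(a\cdot b)=f(a)\cdot f(b)$, also satisfies $f(r)=r$. $\widetilde{K}$ denotes the set of all $r\in K$ for which some finite set adequate for $r$ exists. *)

(* Defs.v *)
From mathcomp Require Import all_boot all_algebra.
Set Implicit Arguments. Unset Strict Implicit. Unset Printing Implicit Defensive.
Import GRing.Theory.
Local Open Scope ring_scope.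

(* A finite subset A of K is represented by a list [A : seq K].
   A mapping f : A -> K is represented by a total function K -> K whose
   values outside A are irrelevant (all conditions only mention points of A). *)
Definition adequate_cond (K : fieldType) (A : seq K) (f : K -> K) : Prop :=
  [/\ (1 \in A -> f 1 = 1),
      (forall a b, a \in A -> b \in A -> a + b \in A -> f (a + b) = f a + f b)
    & (forall a b, a \in A -> b \in A -> a * b \in A -> f (a * b) = f a * f b)].

Definition adequate (K : fieldType) (r : K) (A : seq K) : Prop :=
  r \in A /\ forall f : K -> K, adequate_cond A f -> f r = r.

Definition Ktilde (K : fieldType) (r : K) : Prop :=
  exists A : seq K, adequate r A.

Definition is_subfield (K : fieldType) (S : K -> Prop) : Prop :=
  S 0 /\ S 1 /\
  (forall x y, S x -> S y -> S (x + y)) /\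
  (forall x, S x -> S (- x)) /\
  (forall x y, S x -> S y -> S (x * y)) /\
  (forall x, S x -> x != 0 -> S x^-1).

(* Main.v *)
Require Import Defs.
From mathcomp Require Import all_boot all_algebra.
Import GRing.Theory.
Local Open Scope ring_scope.

Lemma cond_sub {K : fieldType} (A B : seq K) f :
  {subset A <= B} -> adequate_cond B f -> adequate_cond A f.
Proof.
move=> sAB [h1 h2 h3]; split.
- by move=> /sAB.
- by move=> a b /sAB ? /sAB ? /sAB ?; apply: h2.
- by move=> a b /sAB ? /sAB ? /sAB ?; apply: h3.
Qed.

Lemma adeq_fix {K : fieldType} {r : K} {A B : seq K} {f : K -> K} :
  adequate r A -> {subset A <= B} -> adequate_cond B f -> f r = r.
Proof. by move=> [_ H] sAB c; apply: H; apply: cond_sub c. Qed.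

Lemma dbl0 (K : fieldType) (a : K) : a = a + a -> a = 0.
Proof. by move/(congr1 (fun z => z - a)); rewrite subrr addrK. Qed.

Theorem theorem1 (K : fieldType) : is_subfield (@Ktilde K).
Proof.
split.
  exists [:: 0]; split; first by rewrite inE.
  move=> f [_ h2 _]; have := h2 0 0; rewrite addr0 !inE eqxx => /(_ isT isT isT).
  by move/dbl0.
split.
  exists [:: 1]; split; first by rewrite inE.
  by move=> f [h1 _ _]; apply: h1; rewrite inE.
split.
  move=> x y [A hA] [B hB]; exists (A ++ B ++ [:: x + y]); split.
    by rewrite !mem_cat inE eqxx !orbT.
  move=> f c; have [h1 h2 h3] := c.
  have sA : {subset A <= A ++ B ++ [:: x + y]} by move=> z zA; rewrite mem_cat zA.
  have sB : {subset B <= A ++ B ++ [:: x + y]} by move=> z zA; rewrite !mem_cat zA orbT.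
  have xA : x \in A ++ B ++ [:: x + y] by apply: sA; case: hA.
  have yA : y \in A ++ B ++ [:: x + y] by apply: sB; case: hB.
  have sA' : x + y \in A ++ B ++ [:: x + y] by rewrite !mem_cat inE eqxx !orbT.
  by rewrite h2 // (adeq_fix (A:=_) (B:=_) (r:=_) hA sA c) (adeq_fix (A:=_) (B:=_) (r:=_) hB sB c).
split.
  move=> x [A hA]; exists (A ++ [:: - x; 0]); split.
    by rewrite !mem_cat !inE eqxx !orbT.
  move=> f c; have [h1 h2 h3] := c.
  have sA : {subset A <= A ++ [:: - x; 0]} by move=> z zA; rewrite mem_cat zA.
  have xA : x \in A ++ [:: - x; 0] by apply: sA; case: hA.
  have mA : - x \in A ++ [:: - x; 0] by rewrite !mem_cat !inE eqxx !orbT.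
  have zA : 0 \in A ++ [:: - x; 0] by rewrite !mem_cat !inE eqxx !orbT.
  have f0 : f 0 = 0.
    have := h2 0 0 zA zA; rewrite addr0 => /(_ zA).
    by move/dbl0.
  have := h2 x (- x) xA mA; rewrite subrr => /(_ zA).
  rewrite f0 (adeq_fix (A:=_) (B:=_) (r:=_) hA sA c) => e.
  by apply: (@addrI _ x); rewrite -e subrr.
split.
  move=> x y [A hA] [B hB]; exists (A ++ B ++ [:: x * y]); split.
    by rewrite !mem_cat inE eqxx !orbT.
  move=> f c; have [h1 h2 h3] := c.
  have sA : {subset A <= A ++ B ++ [:: x * y]} by move=> z zA; rewrite mem_cat zA.
  have sB : {subset B <= A ++ B ++ [:: x * y]} by move=> z zA; rewrite !mem_cat zA orbT.
  have xA : x \in A ++ B ++ [:: x * y] by apply: sA; case: hA.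
  have yA : y \in A ++ B ++ [:: x * y] by apply: sB; case: hB.
  have sA' : x * y \in A ++ B ++ [:: x * y] by rewrite !mem_cat inE eqxx !orbT.
  by rewrite h3 // (adeq_fix (A:=_) (B:=_) (r:=_) hA sA c) (adeq_fix (A:=_) (B:=_) (r:=_) hB sB c).
move=> x [A hA] x0; exists (A ++ [:: x^-1; 1]); split.
  by rewrite !mem_cat !inE eqxx !orbT.
move=> f c; have [h1 h2 h3] := c.
have sA : {subset A <= A ++ [:: x^-1; 1]} by move=> z zA; rewrite mem_cat zA.
have xA : x \in A ++ [:: x^-1; 1] by apply: sA; case: hA.
have mA : x^-1 \in A ++ [:: x^-1; 1] by rewrite !mem_cat !inE eqxx !orbT.
have oA : 1 \in A ++ [:: x^-1; 1] by rewrite !mem_cat !inE eqxx !orbT.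
have := h3 x x^-1 xA mA; rewrite divff // => /(_ oA).
rewrite h1 // (adeq_fix (A:=_) (B:=_) (r:=_) hA sA c) => e.
by rewrite -[f _]mul1r -(mulVf x0) -mulrA -e mulr1.
Qed.
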